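(* Let $\mathcal R$ be a $Z$-regulus in $\mathcal G$ and let $L$ be a directrix of $\mathcal R$. Then the set of all points of $L$ which are contained in some element of $\mathcal R$ is a $Z$-subline of $L$.
   Context: $K$ is a (not necessarily commutative) field with centre $Z$, and $V$ is a left vector space over $K$ of arbitrary (possibly infinite) dimension with $\dim V>2$. $\mathcal G:=\{X\le V\mid X\cong V/X\}$, assumed nonempty. Points are $1$-dimensional and lines $2$-dimensional subspaces; two subspaces meet if they have a common point. $X,Y\in\mathcal G$ are distant if $V=X\oplus Y$. A $Z$-regulus is a subset $\mathcal R\subseteq\mathcal G$ such that (R1) its elements are mutually distant and $|\mathcal R|\ge3$; (R2) if a line meets three mutually distinct elements of $\mathcal R$ then it meets all elements of $\mathcal R$; (R3) $\mathcal R$ is not properly contained in any subset of $\mathcal G$ satisfying (R1) and (R2). A directrix of $\mathcal R$ is a line meeting all elements of $\mathcal R$. A $Z$-subline (or $Z$-chain) of a line $L$ is a set of points of the form $\{K(xa+yb)\mid (x,y)\in Z^2\setminus\{(0,0)\}\}$, where $a,b$ is a basis of $L$. *)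

(* Defs.v *)
From HB Require Import structures.
From mathcomp Require Import all_boot all_order all_algebra.
Set Implicit Arguments. Unset Strict Implicit. Unset Printing Implicit Defensive.
Import GRing.Theory.
Local Open Scope ring_scope.

Definition division_ring (K : unitRingType) : Prop :=
  forall x : K, x != 0 -> x \is a GRing.unit.

Section Geo.
Variables (K : unitRingType) (V : lmodType K).

Definition centre (z : K) : Prop := forall k : K, z * k = k * z.

Definition subspace (X : V -> Prop) : Prop :=
  X 0 /\ (forall u v, X u -> X v -> X (u + v)) /\ (forall (k : K) v, X v -> X (k *: v)).

Definition subsp (X Y : V -> Prop) : Prop := forall v, X v -> Y v.

Definition span1 (v : V) : V -> Prop := fun w => exists k : K, w = k *: v.

Definition lin_indep2 (a b : V) : Prop :=
  forall x y : K, x *: a + y *: b = 0 -> x = 0 /\ y = 0.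

Definition lin_indep3 (a b c : V) : Prop :=
  forall x y z : K, x *: a + y *: b + z *: c = 0 -> [/\ x = 0, y = 0 & z = 0].

Definition dim_gt2 : Prop := exists a b c : V, lin_indep3 a b c.

Definition basis2 (a b : V) (L : V -> Prop) : Prop :=
  lin_indep2 a b /\ forall w, L w <-> exists x y : K, w = x *: a + y *: b.

Definition point (P : V -> Prop) : Prop :=
  exists v : V, v <> 0 /\ forall w, P w <-> span1 v w.

Definition line (L : V -> Prop) : Prop := exists a b : V, basis2 a b L.

Definition meet (X Y : V -> Prop) : Prop := exists v : V, v <> 0 /\ X v /\ Y v.

Definition linear_map (f : V -> V) : Prop :=
  (forall u v, f (u + v) = f u + f v) /\ (forall (k : K) v, f (k *: v) = k *: f v).

(* X is isomorphic to V/X: by the first isomorphism theorem, a linear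
   isomorphism V/X -> X is the same as a linear map V -> V with image X
   and kernel X. *)
Definition iso_quot (X : V -> Prop) : Prop :=
  exists f : V -> V, linear_map f /\
    (forall v, X (f v)) /\ (forall x, X x -> exists v, f v = x) /\
    (forall v, f v = 0 <-> X v).

Definition inG (X : V -> Prop) : Prop := subspace X /\ iso_quot X.

Definition distant (X Y : V -> Prop) : Prop :=
  (forall v, X v -> Y v -> v = 0) /\ (forall v, exists x y, X x /\ Y y /\ v = x + y).

Definition R1 (S : (V -> Prop) -> Prop) : Prop :=
  (forall X Y, S X -> S Y -> X <> Y -> distant X Y) /\
  (exists X Y W, [/\ S X, S Y, S W & X <> Y /\ X <> W /\ Y <> W]).

Definition R2 (S : (V -> Prop) -> Prop) : Prop :=
  forall L, line L ->
    (exists X Y W, [/\ S X, S Y, S W, X <> Y /\ X <> W /\ Y <> W &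
                     meet L X /\ meet L Y /\ meet L W]) ->
    forall X, S X -> meet L X.

Definition Zregulus (R : (V -> Prop) -> Prop) : Prop :=
  (forall X, R X -> inG X) /\ R1 R /\ R2 R /\
  (forall S : (V -> Prop) -> Prop,
     (forall X, S X -> inG X) -> R1 S -> R2 S ->
     (forall X, R X -> S X) -> forall X, S X -> R X).

Definition directrix (R : (V -> Prop) -> Prop) (L : V -> Prop) : Prop :=
  line L /\ forall X, R X -> meet L X.

Definition Zsubline (L : V -> Prop) (S : (V -> Prop) -> Prop) : Prop :=
  exists a b : V, basis2 a b L /\
    forall P, S P <->
      exists x y : K, [/\ centre x, centre y, (x, y) <> (0, 0) &
                        forall w, P w <-> span1 (x *: a + y *: b) w].

End Geo.

(* Main.v *)
From HB Require Import structures.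
From mathcomp Require Import all_boot all_order all_algebra.
Require Import Defs.
From Stdlib Require Import ClassicalEpsilon FunctionalExtensionality PropExtensionality Classical.
Set Implicit Arguments. Unset Strict Implicit. Unset Printing Implicit Defensive.
Import GRing.Theory.
Local Open Scope ring_scope.

Section Alg.
Variable K : unitRingType.
Hypothesis hK : division_ring K.

Lemma dr_mulVr (x : K) : x != 0 -> x^-1 * x = 1.
Proof. by move=> h; rewrite mulVr // hK. Qed.
Lemma dr_mulrV (x : K) : x != 0 -> x * x^-1 = 1.
Proof. by move=> h; rewrite mulrV // hK. Qed.
Lemma dr_mulKr (x y : K) : x != 0 -> x^-1 * (x * y) = y.
Proof. by move=> h; rewrite mulrA dr_mulVr // mul1r. Qed.
Lemma dr_mulf_neq0 (a b : K) : a != 0 -> b != 0 -> a * b != 0.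
Proof. move=> ha hb; apply/eqP=> e; move/eqP: hb; apply.
by rewrite -(dr_mulKr b ha) e mulr0. Qed.
Lemma dr_inv_neq0 (a : K) : a != 0 -> a^-1 != 0.
Proof. move=> ha; apply/eqP=> e. have := dr_mulVr ha. rewrite e mul0r.
move/eqP; rewrite eq_sym oner_eq0 //. Qed.

Lemma centre0 : centre (0 : K). Proof. by move=> k; rewrite mul0r mulr0. Qed.
Lemma centre1 : centre (1 : K). Proof. by move=> k; rewrite mul1r mulr1. Qed.
Lemma centreB (a b : K) : centre a -> centre b -> centre (a - b).
Proof. by move=> ha hb k; rewrite mulrBl mulrBr ha hb. Qed.
Lemma centreM (a b : K) : centre a -> centre b -> centre (a * b).
Proof. by move=> ha hb k; rewrite -mulrA hb mulrA ha mulrA. Qed.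
Lemma centreV (a : K) : a != 0 -> centre a -> centre a^-1.
Proof. move=> h ha k.
have e : a^-1 * k * a = k by rewrite -mulrA -ha mulrA dr_mulVr // mul1r.
by rewrite -[LHS]mulr1 -(dr_mulrV h) mulrA e. Qed.

Lemma solve1 (p q : K) : exists a b : K, (a != 0 \/ b != 0) /\ a * p + b * q = 0.
Proof.
case: (eqVneq p 0) => hp.
- exists 1, 0; split; first by left; apply: oner_neq0.
  by rewrite hp mulr0 mul0r addr0.
- exists (- (q * p^-1)), 1; split; first by right; apply: oner_neq0.
  by rewrite mulNr -mulrA dr_mulVr // mulr1 mul1r addNr.
Qed.

Lemma solve2_gen (a1 b1 c1 a2 b2 c2 : K) : c1 != 0 ->
  exists a b c : K, (a != 0 \/ b != 0 \/ c != 0) /\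
    a * a1 + b * b1 + c * c1 = 0 /\ a * a2 + b * b2 + c * c2 = 0.
Proof.
move=> hc.
have [a [b [hab e]]] := solve1 (a2 - a1 * c1^-1 * c2) (b2 - b1 * c1^-1 * c2).
exists a, b, (- (a * a1 + b * b1) * c1^-1); split.
  by case: hab => h; [left|right; left].
split.
  by rewrite !mulNr -mulrA dr_mulVr // mulr1 subrr.
rewrite -e mulrBr mulrBr !mulNr !mulrDl !mulrA.
by rewrite opprD !addrA; congr (_ + _); rewrite -!addrA; congr (_ + _); rewrite addrC.
Qed.

Lemma solve2 (a1 b1 c1 a2 b2 c2 : K) :
  exists a b c : K, (a != 0 \/ b != 0 \/ c != 0) /\
    a * a1 + b * b1 + c * c1 = 0 /\ a * a2 + b * b2 + c * c2 = 0.
Proof.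
case: (eqVneq c1 0) => h1; last exact: solve2_gen.
case: (eqVneq c2 0) => h2.
- exists 0, 0, 1; split; first by right; right; apply: oner_neq0.
  by rewrite h1 h2 !mul0r !mulr0 !addr0.
- have [a [b [c [h [e1 e2]]]]] := @solve2_gen a2 b2 c2 a1 b1 c1 h2.
  by exists a, b, c.
Qed.
End Alg.

Section Vec.
Variables (K : unitRingType) (V : lmodType K).
Hypothesis hK : division_ring K.

Lemma sub0 (X : V -> Prop) : subspace X -> X 0. Proof. by case. Qed.
Lemma subD (X : V -> Prop) u v : subspace X -> X u -> X v -> X (u + v).
Proof. by case=> _ [h _]; apply: h. Qed.
Lemma subZ (X : V -> Prop) (k : K) v : subspace X -> X v -> X (k *: v).
Proof. by case=> _ [_ h]; apply: h. Qed.
Lemma subN (X : V -> Prop) v : subspace X -> X v -> X (- v).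
Proof. by move=> h hv; rewrite -scaleN1r; apply: subZ. Qed.
Lemma subB (X : V -> Prop) u v : subspace X -> X u -> X v -> X (u - v).
Proof. by move=> h hu hv; apply: subD => //; apply: subN. Qed.

Lemma scale_nzK (k : K) (v : V) : k != 0 -> k *: v = 0 -> v = 0.
Proof. by move=> hk e; rewrite -[v]scale1r -(dr_mulVr hK hk) -scalerA e scaler0. Qed.
Lemma scale_nzV (k : K) (v : V) : v <> 0 -> k *: v = 0 -> k = 0.
Proof. move=> hv e; case: (eqVneq k 0) => // hk; by case: hv; apply: scale_nzK e. Qed.

Lemma add6AC (x1 x2 y1 y2 z1 z2 : V) :
  (x1 + x2) + (y1 + y2) + (z1 + z2) = (x1 + y1 + z1) + (x2 + y2 + z2).
Proof. by rewrite [(x1 + x2) + _]addrACA [LHS]addrACA. Qed.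

Lemma line_sub (e1 e2 : V) M : basis2 e1 e2 M -> subspace M.
Proof.
case=> _ h; split; [|split].
- by apply/h; exists 0, 0; rewrite !scale0r addr0.
- move=> u v /h [a [b ->]] /h [c [d ->]]; apply/h; exists (a + c), (b + d).
  by rewrite !scalerDl addrACA.
- move=> k v /h [a [b ->]]; apply/h; exists (k * a), (k * b).
  by rewrite scalerDr !scalerA.
Qed.

Lemma dep3 (e1 e2 : V) M a b c : basis2 e1 e2 M -> M a -> M b -> M c ->
  exists x y z : K, (x != 0 \/ y != 0 \/ z != 0) /\ x *: a + y *: b + z *: c = 0.
Proof.
case=> _ h /h [a1 [a2 ->]] /h [b1 [b2 ->]] /h [c1 [c2 ->]].
have [x [y [z [hn [e1' e2']]]]] := solve2 hK a1 b1 c1 a2 b2 c2.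
exists x, y, z; split => //.
rewrite !scalerDr !scalerA add6AC -!scalerDl e1' e2' !scale0r addr0 //.
Qed.

Lemma point_span (v : V) (k : K) : k != 0 -> forall w, span1 (k *: v) w <-> span1 v w.
Proof.
move=> hk w; rewrite /span1; split.
- by case=> c ->; exists (c * k); rewrite scalerA.
- by case=> c ->; exists (c * k^-1); rewrite scalerA -mulrA dr_mulVr // mulr1.
Qed.
End Vec.

Lemma distC (K : unitRingType) (V : lmodType K) (A B : V -> Prop) :
  distant A B -> distant B A.
Proof.
case=> h1 h2; split; first by move=> v hb ha; apply: h1.
by move=> v; have [x [y [hx [hy ->]]]] := h2 v; exists y, x; rewrite addrC.
Qed.

Section Geo3.
Variables (K : unitRingType) (V : lmodType K).
Hypothesis hK : division_ring K.
Variables X Y W : V -> Prop.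
Hypotheses (sX : subspace X) (sY : subspace Y) (sW : subspace W).
Hypothesis iXY : forall v, X v -> Y v -> v = 0.
Hypothesis iWY : forall v, W v -> Y v -> v = 0.
Hypothesis dWX : distant W X.
Variable px : V -> V.
Hypothesis hpx : forall v, X (px v) /\ Y (v - px v).
Variable phi : V -> V.
Hypothesis hphi : forall v, Y (phi v) /\ W (px v + phi v).

Lemma pxX v : X (px v). Proof. by case: (hpx v). Qed.
Lemma pyY v : Y (v - px v). Proof. by case: (hpx v). Qed.
Lemma phiY' v : Y (phi v). Proof. by case: (hphi v). Qed.
Lemma phiW v : W (px v + phi v). Proof. by case: (hphi v). Qed.

Lemma eq_sub0 (u v : V) : u - v = 0 -> u = v.
Proof. by move/eqP; rewrite subr_eq0 => /eqP. Qed.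

Lemma px_uniq v x : X x -> Y (v - x) -> px v = x.
Proof.
move=> hx hy; apply: eq_sub0; apply: iXY; first by apply: subB => //; apply: pxX.
have -> : px v - x = (v - x) - (v - px v) by rewrite opprB [RHS]addrC addrA subrK.
by apply: subB => //; apply: pyY.
Qed.

Lemma pxD u v : px (u + v) = px u + px v.
Proof.
apply: px_uniq; first by apply: subD => //; apply: pxX.
by rewrite opprD addrACA; apply: subD => //; apply: pyY.
Qed.
Lemma pxZ (k : K) v : px (k *: v) = k *: px v.
Proof.
apply: px_uniq; first by apply: subZ => //; apply: pxX.
by rewrite -scalerBr; apply: subZ => //; apply: pyY.
Qed.
Lemma pxN v : px (- v) = - px v.
Proof. by rewrite -scaleN1r pxZ scaleN1r. Qed.
Lemma pxB u v : px (u - v) = px u - px v.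
Proof. by rewrite pxD pxN. Qed.
Lemma px_X x : X x -> px x = x.
Proof. by move=> hx; apply: px_uniq => //; rewrite subrr; apply: sub0. Qed.
Lemma px_Y y : Y y -> px y = 0.
Proof. by move=> hy; apply: px_uniq; [apply: sub0 | rewrite subr0]. Qed.
Lemma px0 : px 0 = 0. Proof. by apply: px_Y; apply: sub0. Qed.
Lemma pxpx v : px (px v) = px v. Proof. by apply: px_X; apply: pxX. Qed.
Lemma Y_px v : px v = 0 -> Y v.
Proof. by move=> h; have := pyY v; rewrite h subr0. Qed.
Lemma X_px v : px v = v -> X v.
Proof. by move=> h; rewrite -h; apply: pxX. Qed.

Lemma phi_uniq v y : Y y -> W (px v + y) -> phi v = y.
Proof.
move=> hy hw; apply: eq_sub0; apply: iWY; last by apply: subB => //; apply: phiY'.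
have -> : phi v - y = (px v + phi v) - (px v + y).
  by rewrite opprD addrACA subrr add0r.
by apply: subB => //; apply: phiW.
Qed.

Lemma phiD u v : phi (u + v) = phi u + phi v.
Proof.
apply: phi_uniq; first by apply: subD => //; apply: phiY'.
by rewrite pxD addrACA; apply: subD => //; apply: phiW.
Qed.
Lemma phiZ (k : K) v : phi (k *: v) = k *: phi v.
Proof.
apply: phi_uniq; first by apply: subZ => //; apply: phiY'.
by rewrite pxZ -scalerDr; apply: subZ => //; apply: phiW.
Qed.
Lemma phiN v : phi (- v) = - phi v.
Proof. by rewrite -scaleN1r phiZ scaleN1r. Qed.
Lemma phiB u v : phi (u - v) = phi u - phi v.
Proof. by rewrite phiD phiN. Qed.
Lemma phi_px v : phi (px v) = phi v.
Proof. by apply: phi_uniq; [apply: phiY' | rewrite pxpx; apply: phiW]. Qed.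
Lemma phi_Y y : Y y -> phi y = 0.
Proof. by move=> hy; apply: phi_uniq; [apply: sub0|rewrite px_Y // addr0; apply: sub0]. Qed.
Lemma phi0 : phi 0 = 0. Proof. by apply: phi_Y; apply: sub0. Qed.
Lemma phiphi v : phi (phi v) = 0. Proof. by apply: phi_Y; apply: phiY'. Qed.
Lemma px_phi v : px (phi v) = 0. Proof. by apply: px_Y; apply: phiY'. Qed.
Lemma phi_inj x : X x -> phi x = 0 -> x = 0.
Proof.
move=> hx h; case: dWX => h1 _; apply: h1 => //.
by have := phiW x; rewrite h addr0 px_X.
Qed.
Lemma phi_surj y : Y y -> exists x, X x /\ phi x = y.
Proof.
move=> hy; case: dWX => _ h2; have [w [x' [hw [hx' e]]]] := h2 y.
exists (- x'); split; first by apply: subN.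
apply: phi_uniq => //; rewrite px_X; last by apply: subN.
by rewrite e [w + x']addrC addKr.
Qed.
Lemma W_char v : W v <-> v - px v = phi v.
Proof.
split.
- by move=> hw; symmetry; apply: phi_uniq; [apply: pyY | rewrite addrC subrK].
- by move=> e; have := phiW v; rewrite -e addrC subrK.
Qed.
Lemma X_char v : X v <-> v - px v = 0.
Proof.
split; first by move=> h; rewrite px_X // subrr.
by move=> e; apply: X_px; symmetry; apply: eq_sub0.
Qed.
Lemma Y_char v : Y v <-> px v = 0.
Proof. by split; [apply: px_Y | apply: Y_px]. Qed.

Definition G (mu : K) : V -> Prop := fun v => v - px v = mu *: phi v.

Lemma pyD u v : (u + v) - px (u + v) = (u - px u) + (v - px v).
Proof. by rewrite pxD opprD addrACA. Qed.
Lemma pyZ (k : K) v : k *: v - px (k *: v) = k *: (v - px v).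
Proof. by rewrite pxZ scalerBr. Qed.
Lemma scaleC (mu k : K) (w : V) : centre mu -> k *: (mu *: w) = mu *: (k *: w).
Proof. by move=> h; rewrite !scalerA h. Qed.

Lemma G_sub mu : centre mu -> subspace (G mu).
Proof.
move=> hm; split; [|split].
- by rewrite /G px0 phi0 subr0 scaler0.
- by move=> u v; rewrite /G pyD phiD scalerDr => -> ->.
- by move=> k v; rewrite /G pyZ phiZ => ->; apply: scaleC.
Qed.

Lemma G_elem mu x : X x -> G mu (x + mu *: phi x).
Proof.
move=> hx; rewrite /G pxD pxZ px_phi scaler0 addr0 px_X // phiD phiZ phiphi scaler0 addr0.
by rewrite [x + _]addrC addrK.
Qed.

Lemma G_decomp mu g : G mu g -> g = px g + mu *: phi (px g).
Proof. by move=> e; rewrite phi_px -e addrC subrK. Qed.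

Lemma G0 v : G 0 v <-> X v.
Proof. by rewrite /G scale0r; split => /X_char. Qed.
Lemma G1 v : G 1 v <-> W v.
Proof. by rewrite /G scale1r; split => /W_char. Qed.

Lemma dist_YG mu : centre mu -> distant Y (G mu).
Proof.
move=> hm; split.
- move=> v hy; rewrite /G => e.
  by move: e; rewrite -phi_px px_Y // phi0 scaler0 subr0.
- move=> v; exists (v - px v - mu *: phi v), (px v + mu *: phi v); split.
    by apply: subB => //; [apply: pyY | apply: subZ => //; apply: phiY'].
  split; first by rewrite -phi_px; apply: G_elem; apply: pxX.
  by rewrite -[v - px v - _]addrA -opprD subrK.
Qed.

Lemma dist_GG mu nu : centre mu -> centre nu -> mu != nu -> distant (G mu) (G nu).
Proof.
move=> hm hn hmn; split.
- move=> v e1 e2.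
  have h0 : (mu - nu) *: phi v = 0 by rewrite scalerBl -e1 -e2 subrr.
  have hp : phi v = 0 by apply: (scale_nzK hK) h0; rewrite subr_eq0.
  have hx : px v = 0 by apply: phi_inj; [apply: pxX | rewrite phi_px].
  by move: e1; rewrite /G hx hp scaler0 subr0.
- move=> v; have [z [hz ez]] := phi_surj (pyY v).
  set x0 := px v; set c := mu - nu.
  have hc : c != 0 by rewrite subr_eq0.
  set x1 := c^-1 *: (z - nu *: x0); set x2 := x0 - x1.
  have hx0 : X x0 by apply: pxX.
  have hx1 : X x1 by apply: subZ => //; apply: subB => //; apply: subZ.
  have hx2 : X x2 by apply: subB.
  exists (x1 + mu *: phi x1), (x2 + nu *: phi x2); split; first by apply: G_elem.
  split; first by apply: G_elem.
  have hz' : mu *: x1 + nu *: x2 = z.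
    rewrite /x2 scalerBr addrCA -scalerBl /x1 scalerA (dr_mulrV hK) // scale1r.
    by rewrite addrC subrK.
  by rewrite addrACA /x2 [x1 + _]addrC subrK -!phiZ -phiD hz' ez addrC subrK.
Qed.

Definition Fam (o : option K) : V -> Prop :=
  match o with None => Y | Some mu => G mu end.
Definition okp (o : option K) : Prop :=
  match o with None => True | Some mu => centre mu end.

Lemma dist_Fam o1 o2 : okp o1 -> okp o2 -> o1 <> o2 -> distant (Fam o1) (Fam o2).
Proof.
case: o1 => [m|]; case: o2 => [n|] //= h1 h2 hne.
- by apply: dist_GG => //; apply/eqP => e; apply: hne; rewrite e.
- exact: (distC (dist_YG h1)).
- by apply: dist_YG.
Qed.

Lemma Fam_sub o : okp o -> subspace (Fam o).
Proof. by case: o => [m|] //= h; apply: G_sub. Qed.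

Lemma meet_all M u : subspace M -> X u -> u <> 0 -> M u -> M (phi u) ->
  forall o, okp o -> meet M (Fam o).
Proof.
move=> hM hu hu0 hMu hMp [n|] /= hn.
- exists (u + n *: phi u); split.
    by move=> e; apply: hu0; have := congr1 px e; rewrite pxD pxZ px_phi scaler0 addr0 px_X // px0.
  by split; [apply: subD => //; apply: subZ | apply: G_elem].
- exists (phi u); split; first by move=> e; apply: hu0; apply: phi_inj.
  by split => //; apply: phiY'.
Qed.

Lemma comb1 (a b l : K) (u : V) : centre l ->
  a *: (b *: u) - l *: (a *: u) = (a * (b - l)) *: u.
Proof. by move=> hl; rewrite !scalerA (hl a) mulrBr scalerBl. Qed.
Lemma sub3 (a b c a' b' c' : V) :
  (a + b + c) - (a' + b' + c') = (a - a') + (b - b') + (c - c').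
Proof. by rewrite !opprD add6AC. Qed.

Lemma pxG_nz l g : G l g -> g <> 0 -> px g <> 0.
Proof. by move=> eg hg h; apply: hg; rewrite (G_decomp eg) h phi0 scaler0 addr0. Qed.

Lemma nz_of_ne (a b : K) : a != b -> a - b != 0.
Proof. by rewrite subr_eq0. Qed.

Lemma coreA M e1 e2 l1 l2 l3 p q r : basis2 e1 e2 M ->
  centre l1 -> centre l2 -> centre l3 -> l1 != l2 -> l1 != l3 -> l2 != l3 ->
  M p -> M q -> M r -> p <> 0 -> q <> 0 -> r <> 0 ->
  G l1 p -> G l2 q -> G l3 r -> exists v, [/\ X v, v <> 0, M v & M (phi v)].
Proof.
move=> hB c1 c2 c3 n12 n13 n23 Mp Mq Mr p0 q0 r0 eP eQ eR.
have sM := line_sub hB.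
have [a [b [c [hn hS]]]] := dep3 hK hB Mp Mq Mr.
set u := px p; set v := px q; set w := px r.
have u0 : u <> 0 by exact: (pxG_nz eP p0).
have v0 : v <> 0 by exact: (pxG_nz eQ q0).
have w0 : w <> 0 by exact: (pxG_nz eR r0).
have E1 : a *: u + b *: v + c *: w = 0.
  by move: (congr1 px hS); rewrite !pxD !pxZ px0.
have E3 : (a * (l1 - l3)) *: u + (b * (l2 - l3)) *: v = 0.
  move: (congr1 (fun s => s - px s - l3 *: phi s) hS) => /=.
  rewrite px0 phi0 scaler0 !subr0 !pyD !pyZ !phiD !phiZ eP eQ eR.
  rewrite !scalerDr sub3 !comb1 // subrr mulr0 scale0r addr0.
  rewrite -(phi_px p) -(phi_px q) -/u -/v -!phiZ -phiD => h.
  apply: (phi_inj _ h); apply: subD => //; apply: subZ => //; apply: pxX.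
case: (eqVneq a 0) => ha.
  exfalso; move: E3; rewrite ha mul0r scale0r add0r => /(scale_nzV hK v0) hbd.
  have hb0 : b = 0.
    case: (eqVneq b 0) => // hb; exfalso.
    by move: (dr_mulf_neq0 hK hb (nz_of_ne n23)); rewrite hbd eqxx.
  move: E1; rewrite ha hb0 !scale0r !add0r => /(scale_nzV hK w0) hc.
  by case: hn => [|[]] /eqP; [rewrite ha|rewrite hb0|rewrite hc].
set cc := a * (l1 - l3); set d := b * (l2 - l3).
have hcc : cc != 0 by apply: (dr_mulf_neq0 hK) => //; apply: nz_of_ne.
set k := - (cc^-1 * d).
have eu : u = k *: v.
  have e : cc *: u = - (d *: v) by move/eqP: E3; rewrite addr_eq0 => /eqP.
  by rewrite -[u]scale1r -(dr_mulVr hK hcc) -scalerA e scalerN scalerA scaleNr.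
have hk : k != 0.
  by apply/eqP => h; apply: u0; rewrite eu h scale0r.
have hp : k^-1 *: p = v + l1 *: phi v.
  rewrite (G_decomp eP) -/u eu phiZ scalerDr [k^-1 *: (k *: v)]scalerA (dr_mulVr hK hk) scale1r.
  by rewrite scaleC // [k^-1 *: (k *: _)]scalerA (dr_mulVr hK hk) scale1r.
have hq : q = v + l2 *: phi v by rewrite (G_decomp eQ).
have hph : (l1 - l2) *: phi v = k^-1 *: p - q.
  by rewrite hp hq opprD addrACA subrr add0r scalerBl.
have Mph : M (phi v).
  have -> : phi v = (l1 - l2)^-1 *: ((l1 - l2) *: phi v).
    by rewrite scalerA (dr_mulVr hK (nz_of_ne n12)) scale1r.
  by rewrite hph; apply: subZ => //; apply: subB => //; apply: subZ.
exists v; split => //; first by apply: pxX.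
have -> : v = q - l2 *: phi v by rewrite hq addrK.
by apply: subB => //; apply: subZ.
Qed.

Lemma coreB M e1 e2 l1 l2 y q r : basis2 e1 e2 M ->
  centre l1 -> centre l2 -> l1 != l2 ->
  M y -> M q -> M r -> y <> 0 -> q <> 0 -> r <> 0 ->
  Y y -> G l1 q -> G l2 r -> exists v, [/\ X v, v <> 0, M v & M (phi v)].
Proof.
move=> hB c1 c2 n12 My Mq Mr y0 q0 r0 yY eQ eR.
have sM := line_sub hB.
have [a [b [c [hn hS]]]] := dep3 hK hB My Mq Mr.
set v := px q; set w := px r.
have v0 : v <> 0 by exact: (pxG_nz eQ q0).
have w0 : w <> 0 by exact: (pxG_nz eR r0).
have E1 : b *: v + c *: w = 0.
  by move: (congr1 px hS); rewrite !pxD !pxZ px_Y // scaler0 add0r px0.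
have E3 : a *: y + (b * (l1 - l2)) *: phi q = 0.
  move: (congr1 (fun s => s - px s - l2 *: phi s) hS) => /=.
  rewrite px0 phi0 scaler0 !subr0 !pyD !pyZ !phiD !phiZ eQ eR (px_Y yY) (phi_Y yY).
  rewrite subr0 scaler0 !scalerDr scaler0 sub3 subr0 !comb1 // subrr mulr0 scale0r addr0.
  done.
case: (eqVneq b 0) => hb.
  exfalso; move: E1; rewrite hb scale0r add0r => /(scale_nzV hK w0) hc.
  move: E3; rewrite hb mul0r scale0r addr0 => /(scale_nzV hK y0) ha.
  by case: hn => [|[]] /eqP; [rewrite ha|rewrite hb|rewrite hc].
set d := b * (l1 - l2).
have hd : d != 0 by apply: (dr_mulf_neq0 hK) => //; apply: nz_of_ne.
have eph : phi q = d^-1 *: (- (a *: y)).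
  have e : d *: phi q = - (a *: y) by move/eqP: E3; rewrite addrC addr_eq0 => /eqP.
  by rewrite -e scalerA (dr_mulVr hK hd) scale1r.
have Mph : M (phi v) by rewrite phi_px eph; apply: subZ => //; apply: subN => //; apply: subZ.
exists v; split => //; first by apply: pxX.
have -> : v = q - l1 *: phi v by rewrite {1}(G_decomp eQ) -/v addrK.
by apply: subB => //; apply: subZ.
Qed.

Lemma core_meet M e1 e2 o1 o2 o3 : basis2 e1 e2 M ->
  okp o1 -> okp o2 -> okp o3 -> o1 <> o2 -> o1 <> o3 -> o2 <> o3 ->
  meet M (Fam o1) -> meet M (Fam o2) -> meet M (Fam o3) ->
  exists v, [/\ X v, v <> 0, M v & M (phi v)].
Proof.
have ne : forall m n : K, Some m <> Some n -> m != n.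
  by move=> m n h; apply/eqP => e; apply: h; rewrite e.
move=> hB; case: o1 => [m1|]; case: o2 => [m2|]; case: o3 => [m3|] //= h1 h2 h3 n12 n13 n23
  [p [p0 [Mp Gp]]] [q [q0 [Mq Gq]]] [r [r0 [Mr Gr]]].
- by apply: (coreA hB h1 h2 h3 (ne _ _ n12) (ne _ _ n13) (ne _ _ n23) Mp Mq Mr).
- by apply: (coreB hB h1 h2 (ne _ _ n12) Mr Mp Mq).
- by apply: (coreB hB h1 h3 (ne _ _ n13) Mq Mp Mr).
- by apply: (coreB hB h2 h3 (ne _ _ n23) Mp Mq Mr).
Qed.

Lemma dep_scal (u z : V) : u <> 0 -> ~ lin_indep2 u z -> exists k, z = k *: u.
Proof.
move=> hu hn; apply: NNPP => hno; apply: hn => s t e.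
case: (eqVneq t 0) => ht.
  by move: e; rewrite ht scale0r addr0 => /(scale_nzV hK hu) hs0; split.
exfalso; apply: hno; exists (- (t^-1 * s)).
have e' : t *: z = - (s *: u) by move/eqP: e; rewrite addrC addr_eq0 => /eqP.
by rewrite -[z]scale1r -(dr_mulVr hK ht) -scalerA e' scalerN scalerA scaleNr.
Qed.

Definition ell (x : V) : V -> Prop := fun w => exists s t : K, w = s *: x + t *: phi x.

Lemma phi_nz x : X x -> x <> 0 -> phi x <> 0.
Proof. by move=> hx h0 e; apply: h0; apply: phi_inj. Qed.

Lemma pxe x (m : K) : X x -> px (x + m *: phi x) = x.
Proof. by move=> hx; rewrite pxD pxZ px_phi scaler0 addr0 px_X. Qed.

Lemma ell_basis x : X x -> x <> 0 -> basis2 x (phi x) (ell x).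
Proof.
move=> hx h0; split; last by move=> w; split.
move=> s t e.
have hs : s = 0.
  by move: (congr1 px e); rewrite pxD !pxZ px_phi px_X // scaler0 addr0 px0 => /(scale_nzV hK h0).
split => //; move: e; rewrite hs scale0r add0r; apply: (scale_nzV hK); exact: phi_nz.
Qed.

Lemma ell_meetX x : X x -> x <> 0 -> meet (ell x) X.
Proof. by move=> hx h0; exists x; split => //; split => //; exists 1, 0; rewrite scale1r scale0r addr0. Qed.
Lemma ell_meetY x : X x -> x <> 0 -> meet (ell x) Y.
Proof.
move=> hx h0; exists (phi x); split; first exact: phi_nz.
by split; [exists 0, 1; rewrite scale1r scale0r add0r | apply: phiY'].
Qed.
Lemma ell_meetW x : X x -> x <> 0 -> meet (ell x) W.
Proof.
move=> hx h0; exists (x + phi x); split.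
  by move=> e; apply: h0; move: (congr1 px e); rewrite -[phi x]scale1r pxe // px0.
split; first by exists 1, 1; rewrite !scale1r.
by have := phiW x; rewrite px_X.
Qed.

Lemma X_two (hdim : dim_gt2 V) x : X x -> x <> 0 -> exists z, X z /\ lin_indep2 x z.
Proof.
move=> hx h0; apply: NNPP => hno.
have hsc : forall z, X z -> exists k, z = k *: x.
  by move=> z hz; apply: dep_scal => // hi; apply: hno; exists z.
have hall : forall v, ell x v.
  move=> v; have [z [hz ez]] := phi_surj (pyY v).
  have [k1 e1] := hsc _ (pxX v); have [k2 e2] := hsc _ hz.
  exists k1, k2; rewrite -e1 -phiZ -e2 ez.
  by rewrite addrC subrK.
case: hdim => a [b [c hi]].
have [s [t [u [hn e]]]] := dep3 hK (ell_basis hx h0) (hall a) (hall b) (hall c).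
case: (hi _ _ _ e) => e1 e2 e3; move: hn; rewrite e1 e2 e3 eqxx.
by case => [|[]].
Qed.

Section Classify.
Variable T : V -> Prop.
Hypothesis sT : subspace T.
Hypothesis iTY : forall v, T v -> Y v -> v = 0.
Hypothesis mT : forall x, X x -> x <> 0 -> meet (ell x) T.

Definition Hm (m : K) x := T (x + phi (m *: x)).

Lemma Tuniq u y1 y2 : X y1 -> X y2 -> T (u + phi y1) -> T (u + phi y2) -> y1 = y2.
Proof.
move=> h1 h2 t1 t2; apply: eq_sub0; apply: phi_inj; first by apply: subB.
apply: iTY; last by apply: phiY'.
have -> : phi (y1 - y2) = (u + phi y1) - (u + phi y2) by rewrite opprD addrACA subrr add0r phiB.
by apply: subB.
Qed.

Lemma step1 x : X x -> x <> 0 -> exists m, Hm m x.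
Proof.
move=> hx h0; have [t [t0 [[s [s' et]] Tt]]] := mT hx h0.
case: (eqVneq s 0) => hs.
  by exfalso; apply: t0; apply: iTY => //; rewrite et hs scale0r add0r; apply: subZ => //; apply: phiY'.
exists (s^-1 * s'); rewrite /Hm phiZ -scalerA.
have -> : x + s^-1 *: (s' *: phi x) = s^-1 *: t.
  by rewrite et scalerDr [s^-1 *: (s *: x)]scalerA (dr_mulVr hK hs) scale1r.
by apply: subZ.
Qed.

Lemma scale_inj (m m' : K) (x : V) : x <> 0 -> m *: x = m' *: x -> m = m'.
Proof.
move=> h0 e; apply/eqP; rewrite -subr_eq0; apply/eqP.
by apply: (scale_nzV hK h0); rewrite scalerBl e subrr.
Qed.

Lemma indep_nz1 (b x : V) : lin_indep2 b x -> b <> 0.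
Proof.
move=> hi e; have [h _] : (1 : K) = 0 /\ (0 : K) = 0 by apply: hi; rewrite e scaler0 scale0r addr0.
by move: (oner_neq0 K); rewrite h eqxx.
Qed.
Lemma indep_nz2 (b x : V) : lin_indep2 b x -> x <> 0.
Proof.
move=> hi e; have [_ h] : (0 : K) = 0 /\ (1 : K) = 0 by apply: hi; rewrite e scaler0 scale0r addr0.
by move: (oner_neq0 K); rewrite h eqxx.
Qed.
Lemma indep_nzD (b x : V) : lin_indep2 b x -> b + x <> 0.
Proof.
move=> hi e; have [h _] : (1 : K) = 0 /\ (1 : K) = 0 by apply: hi; rewrite !scale1r.
by move: (oner_neq0 K); rewrite h eqxx.
Qed.

Lemma step3 b x m m' : X b -> X x -> lin_indep2 b x -> Hm m b -> Hm m' x -> m = m'.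
Proof.
move=> hb hx hi Hb Hx.
have [ms Hs] := step1 (subD sX hb hx) (indep_nzD hi).
have Hsum : T ((b + x) + phi (m *: b + m' *: x)).
  by rewrite phiD addrACA; apply: subD.
have e := Tuniq (subD sX (subZ m sX hb) (subZ m' sX hx)) (subZ ms sX (subD sX hb hx)) Hsum Hs.
have e2 : (m - ms) *: b + (m' - ms) *: x = 0.
  by rewrite !scalerBl addrACA -opprD e scalerDr subrr.
have [h1 h2] := hi _ _ e2.
by move/eqP: h1; rewrite subr_eq0 => /eqP ->; move/eqP: h2; rewrite subr_eq0 => /eqP ->.
Qed.

Lemma step4 (hdim : dim_gt2 V) a m0 : X a -> a <> 0 -> Hm m0 a -> forall x, X x -> Hm m0 x.
Proof.
move=> ha a0 Ha x hx.
case: (classic (x = 0)) => [->|x0].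
  by rewrite /Hm scaler0 phi0 addr0; apply: sub0.
have [m' Hx] := step1 hx x0.
case: (classic (lin_indep2 a x)) => hi.
  by rewrite (step3 ha hx hi Ha Hx).
have [k ek] := dep_scal a0 hi.
have k0 : k != 0 by apply/eqP => e; apply: x0; rewrite ek e scale0r.
have [z [hz hiz]] := X_two hdim ha a0.
have [mz Hz] := step1 hz (indep_nz2 hiz).
have e1 := step3 ha hz hiz Ha Hz.
have hzx : lin_indep2 z x.
  move=> s t e.
  have e' : (t * k) *: a + s *: z = 0 by rewrite -scalerA -ek addrC.
  have [h1 h2] := hiz _ _ e'; split => //.
  by rewrite -[t]mulr1 -(dr_mulrV hK k0) mulrA h1 mul0r.
by rewrite e1 (step3 hz hx hzx Hz Hx).
Qed.

Lemma step5 a m0 : X a -> a <> 0 -> (forall x, X x -> Hm m0 x) -> centre m0.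
Proof.
move=> ha a0 Hall k.
case: (eqVneq k 0) => [->|k0]; first by rewrite mul0r mulr0.
have h1 := Hall _ (subZ k sX ha).
have h2 : T (k *: a + phi (k *: (m0 *: a))).
  by rewrite phiZ -scalerDr; apply: subZ => //; apply: (Hall _ ha).
have e := Tuniq (subZ m0 sX (subZ k sX ha)) (subZ k sX (subZ m0 sX ha)) h1 h2.
by apply: (scale_inj a0); rewrite -!scalerA.
Qed.

Lemma classify (hdim : dim_gt2 V) a : X a -> a <> 0 ->
  exists mu, centre mu /\ forall v, T v <-> G mu v.
Proof.
move=> ha a0; have [m0 Ha] := step1 ha a0.
have Hall := step4 hdim ha a0 Ha.
exists m0; split; first exact: (step5 ha a0 Hall).
move=> v; split.
- move=> Tv.
  have Tp := Hall _ (pxX v).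
  have D0 : v - (px v + phi (m0 *: px v)) = 0.
    apply: iTY; first by apply: subB.
    by rewrite opprD addrA; apply: subB => //; [apply: pyY | apply: phiY'].
  have ev := eq_sub0 D0.
  by rewrite /G {1}ev addrC addKr phiZ phi_px.
- move=> Gv; rewrite (G_decomp Gv) -phiZ; apply: Hall; apply: pxX.
Qed.
End Classify.

Lemma G_inG mu : centre mu -> inG X -> inG (G mu).
Proof.
move=> hm [_ [f [[fD fZ] [fX [fS fK]]]]].
split; first exact: G_sub.
pose A v := v + mu *: phi v.
pose B v := v - mu *: phi v.
have AB v : A (B v) = v by rewrite /A /B phiB phiZ phiphi scaler0 subr0 subrK.
have BA v : B (A v) = v by rewrite /A /B phiD phiZ phiphi scaler0 addr0 addrK.
have AD u v : A (u + v) = A u + A v by rewrite /A phiD scalerDr addrACA.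
have AZ (k : K) v : A (k *: v) = k *: A v by rewrite /A phiZ -[mu *: (k *: _)]scaleC // scalerDr.
have BD u v : B (u + v) = B u + B v by rewrite /B phiD scalerDr opprD addrACA.
have BZ (k : K) v : B (k *: v) = k *: B v by rewrite /B phiZ -[mu *: (k *: _)]scaleC // scalerBr.
have A0 : forall y, A y = 0 -> y = 0 by move=> y e; rewrite -(BA y) e /B phi0 scaler0 subr0.
exists (fun v => A (f (B v))); split; [split|split; [|split]].
- by move=> u v; rewrite BD fD AD.
- by move=> k v; rewrite BZ fZ AZ.
- by move=> v; apply: G_elem; apply: fX.
- move=> g hg; have [w ew] := fS _ (pxX g).
  exists (A w); rewrite BA ew /A.
  by rewrite -(G_decomp hg).
- move=> v; split.
  + move=> /A0 /fK /X_char; rewrite /B pxB pxZ px_phi scaler0 subr0 /G => e.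
    by move: e; rewrite addrAC => /eq_sub0.
  + move=> hv; have : X (B v).
      by apply/X_char; rewrite /B pxB pxZ px_phi scaler0 subr0 addrAC hv subrr.
    by move/fK => ->; rewrite /A phi0 scaler0 addr0.
Qed.

Lemma fam_eq (T : V -> Prop) mu : (forall v, T v <-> G mu v) -> T = G mu.
Proof. by move=> h; apply: functional_extensionality => v; apply: propositional_extensionality. Qed.

Lemma main_in (hdim : dim_gt2 V) (R : (V -> Prop) -> Prop)
  (hinG : forall T, R T -> inG T)
  (hR1d : forall T1 T2, R T1 -> R T2 -> T1 <> T2 -> distant T1 T2)
  (hR2 : R2 R)
  (hR3 : forall S : (V -> Prop) -> Prop,
     (forall X, S X -> inG X) -> R1 S -> R2 S ->
     (forall X, R X -> S X) -> forall X, S X -> R X)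
  (RX : R X) (RY : R Y) (RW : R W) (nXY : X <> Y) (nXW : X <> W) (nYW : Y <> W)
  (L : V -> Prop) (hL : directrix R L) :
  Zsubline L (fun P : V -> Prop =>
    point P /\ subsp P L /\ exists X, R X /\ subsp P X).
Proof.
case: hL => [[e1 [e2 hLb]] hLm].
have sL := line_sub hLb.
have [a [a0 [La Xa]]] := hLm X RX.
have [b0 [b00 [Lb Yb]]] := hLm Y RY.
have [c [c0 [Lc Wc]]] := hLm W RW.
have Lpa : L (phi a).
  have [al [be [ga [hn hS]]]] := dep3 hK hLb La Lb Lc.
  have E : al *: a + ga *: px c = 0.
    by move: (congr1 px hS); rewrite !pxD !pxZ px_X // px_Y // scaler0 addr0 px0.
  have hga : ga != 0.
    apply/eqP => hg; move: E; rewrite hg scale0r addr0 => /(scale_nzV hK a0) hal.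
    move: hS; rewrite hal hg !scale0r add0r addr0 => /(scale_nzV hK b00) hbe.
    by case: hn => [|[]] /eqP; [rewrite hal|rewrite hbe|rewrite hg].
  have hal : al != 0.
    apply/eqP => hal; move: E; rewrite hal scale0r add0r => /(scale_nzK hK hga) hc0.
    by apply: c0; apply: iWY => //; apply: Y_px.
  set s := - (ga^-1 * al).
  have hs : s != 0 by rewrite oppr_eq0; apply: (dr_mulf_neq0 hK) => //; apply: (dr_inv_neq0 hK).
  have et : px c = s *: a.
    have e : ga *: px c = - (al *: a) by move/eqP: E; rewrite addrC addr_eq0 => /eqP.
    by rewrite -[px c]scale1r -(dr_mulVr hK hga) -scalerA e scalerN scalerA scaleNr.
  have -> : phi a = s^-1 *: (c - px c).
    have -> : c - px c = phi c by apply/W_char.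
    by rewrite -(phi_px c) et phiZ scalerA (dr_mulVr hK hs) scale1r.
  by apply: subZ => //; apply: subB => //; rewrite et; apply: subZ.
have hind : lin_indep2 a (phi a) by case: (ell_basis Xa a0).
have hbasis : basis2 a (phi a) L.
  split => // w; split.
  - move=> Lw; have [al [be [ga [hn hS]]]] := dep3 hK hLb Lw La Lpa.
    case: (eqVneq al 0) => hal.
      exfalso; move: hS; rewrite hal scale0r add0r => /hind [hb hg].
      by case: hn => [|[]] /eqP; [rewrite hal|rewrite hb|rewrite hg].
    exists (- (al^-1 * be)), (- (al^-1 * ga)).
    have e : al *: w = - (be *: a + ga *: phi a) by move/eqP: hS; rewrite -addrA addr_eq0 => /eqP.
    rewrite -[w]scale1r -(dr_mulVr hK hal) -scalerA e scalerN scalerDr !scalerA.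
    by rewrite opprD !scaleNr.
  - by case=> s [t ->]; apply: subD => //; apply: subZ.
have hcl : forall T, R T -> exists o, okp o /\ T = Fam o.
  move=> T RT; case: (classic (T = Y)) => [->|nTY]; first by exists None.
  have dTY := hR1d T Y RT RY nTY.
  have sT : subspace T by case: (hinG T RT).
  have mT : forall x, X x -> x <> 0 -> meet (ell x) T.
    move=> x hx x0; apply: (hR2 (ell x)) => //.
      by exists x, (phi x); apply: ell_basis.
    exists X, Y, W; split => //.
    by split; [apply: ell_meetX|split; [apply: ell_meetY|apply: ell_meetW]].
  have [mu [hmu hT]] := classify sT (proj1 dTY) mT hdim Xa a0.
  by exists (Some mu); split => //; apply: fam_eq.
have hGR : forall mu, centre mu -> R (G mu).
  move=> mu hmu.
  pose S := fun T => R T \/ T = G mu.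
  have hclS : forall T, S T -> exists o, okp o /\ T = Fam o.
    by move=> T [RT|->]; [apply: hcl | exists (Some mu)].
  apply: (hR3 S); last by right.
  - move=> T [RT|->]; first exact: hinG.
    by apply: G_inG => //; apply: hinG.
  - split.
      move=> T1 T2 /hclS [o1 [h1 ->]] /hclS [o2 [h2 ->]] ne.
      by apply: dist_Fam => // e; apply: ne; rewrite e.
    by exists X, Y, W; split => //; left.
  - move=> M [f1 [f2 hMb]] [T1 [T2 [T3 [S1 S2 S3 [n12 [n13 n23]] [m1 [m2 m3]]]]]] T ST.
    move: S1 S2 S3 n12 n13 n23 m1 m2 m3.
    move=> /hclS [o1 [h1 ->]] /hclS [o2 [h2 ->]] /hclS [o3 [h3 ->]] n12 n13 n23 m1 m2 m3.
    have ne : forall o o', Fam o <> Fam o' -> o <> o' by move=> o o' h e; apply: h; rewrite e.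
    have [v [Xv v0 Mv Mpv]] := core_meet hMb h1 h2 h3 (ne _ _ n12) (ne _ _ n13) (ne _ _ n23) m1 m2 m3.
    have [o [ho ->]] := hclS _ ST.
    exact: (meet_all (line_sub hMb) Xv v0 Mv Mpv ho).
  - by move=> T RT; left.
have pa0 : phi a <> 0 by apply: phi_nz.
exists a, (phi a); split => // P; split.
- move=> [[v [v0 hPv]] [hPL [T [RT hPT]]]].
  have Pv : P v by apply/hPv; exists 1; rewrite scale1r.
  have Lv := hPL v Pv; have Tv := hPT v Pv.
  have [s [t ev]] := (proj2 hbasis v).1 Lv.
  have [o [ho eT]] := hcl T RT; rewrite eT in Tv.
  have pxv : px v = s *: a by rewrite ev pxD !pxZ px_phi px_X // scaler0 addr0.
  have phv : phi v = s *: phi a by rewrite ev phiD !phiZ phiphi scaler0 addr0.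
  have pyv : v - px v = t *: phi a by rewrite pxv {1}ev [s *: a + _]addrC addrK.
  clear eT; case: o ho Tv => [mu|] /= ho Tv.
  + have et : t = mu * s.
      by apply: (scale_inj pa0); rewrite -pyv Tv phv scalerA.
    have s0 : s != 0.
      by apply/eqP => hs0; apply: v0; rewrite ev et hs0 mulr0 !scale0r addr0.
    exists 1, mu; split => //; first exact: centre1.
      by case => /eqP; rewrite oner_eq0.
    move=> w; rewrite hPv.
    have -> : v = s *: (1 *: a + mu *: phi a).
      by rewrite ev scale1r scalerDr scalerA et ho.
    by rewrite point_span.
  + have hs0 : s = 0.
      by apply: (scale_nzV hK a0); rewrite -pxv; apply: px_Y.
    have t0 : t != 0.
      by apply/eqP => ht; apply: v0; rewrite ev hs0 ht !scale0r addr0.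
    exists 0, 1; split => //; [exact: centre0 | exact: centre1 | | ].
      by case => /eqP; rewrite oner_eq0.
    move=> w; rewrite hPv.
    have -> : v = t *: (0 *: a + 1 *: phi a) by rewrite ev hs0 !scale0r scale1r !add0r.
    by rewrite point_span.
- move=> [x [y [cx cy hxy hP]]].
  set v := x *: a + y *: phi a.
  have v0 : v <> 0.
    move=> e; have [hx hy] := hind _ _ e; apply: hxy; by rewrite hx hy.
  have hPs : forall (Z : V -> Prop), subspace Z -> Z v -> subsp P Z.
    by move=> Z sZ Zv w /hP [k ->]; apply: subZ.
  split; first by exists v; split.
  split; first by apply: hPs => //; apply/(proj2 hbasis); exists x, y.
  case: (eqVneq x 0) => hx.
    exists Y; split => //; apply: hPs => //.
    by rewrite /v hx scale0r add0r; apply: subZ => //; apply: phiY'.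
  have cm : centre (x^-1 * y) by apply: centreM => //; apply: centreV.
  exists (G (x^-1 * y)); split; first exact: hGR.
  apply: hPs; first exact: G_sub.
  have -> : v = x *: a + (x^-1 * y) *: phi (x *: a).
    by rewrite phiZ scalerA -mulrA cy mulrA (dr_mulVr hK hx) mul1r.
  by apply: G_elem; apply: subZ.
Qed.
End Geo3.

Lemma fchoice (A B : Type) (P : A -> B -> Prop) :
  (forall a, exists b, P a b) -> exists f : A -> B, forall a, P a (f a).
Proof.
move=> h; exists (fun a => proj1_sig (constructive_indefinite_description _ (h a))).
by move=> a; exact: (proj2_sig (constructive_indefinite_description _ (h a))).
Qed.

Theorem corollary4p7 (K : unitRingType) (V : lmodType K)
  (hK : division_ring K) (hdim : dim_gt2 V) (hG : exists X : V -> Prop, inG X)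
  (R : (V -> Prop) -> Prop) (hR : Zregulus R)
  (L : V -> Prop) (hL : directrix R L) :
  Zsubline L (fun P : V -> Prop =>
    point P /\ subsp P L /\ exists X, R X /\ subsp P X).
Proof.
case: hR => hinG [[hR1d [X [Y [W [RX RY RW [nXY [nXW nYW]]]]]]] [hR2 hR3]].
have dXY := hR1d X Y RX RY nXY.
have dWY := hR1d W Y RW RY (fun e => nYW (esym e)).
have dWX := hR1d W X RW RX (fun e => nXW (esym e)).
have sX : subspace X by case: (hinG X RX).
have sY : subspace Y by case: (hinG Y RY).
have sW : subspace W by case: (hinG W RW).
have [px hpx] : exists px : V -> V, forall v, X (px v) /\ Y (v - px v).
  apply: (fchoice (P := fun v x => X x /\ Y (v - x))) => v.
  have [x [y [hx [hy e]]]] := (proj2 dXY) v.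
  by exists x; split => //; rewrite e [x + y]addrC addrK.
have [phi hphi] : exists phi : V -> V, forall v, Y (phi v) /\ W (px v + phi v).
  apply: (fchoice (P := fun v y => Y y /\ W (px v + y))) => v.
  have [w [y [hw [hy e]]]] := (proj2 dWY) (px v).
  by exists (- y); split; [apply: subN | rewrite e addrK].
exact: (main_in hK sX sY sW (proj1 dXY) (proj1 dWY) dWX hpx hphi hdim hinG hR1d hR2 hR3
  RX RY RW nXY nXW nYW hL).
Qed.
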